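(* Let $\varphi(z,x,y)$ satisfy Conditions (C1)–(C5) described in the context, be twice continuously differentiable in $z$, and satisfy $\varphi''(z,x,y)\ge c_7z^{-2}\varphi(z,x,y)$ for $z>0$ and a.e. $(x,y)$, with a constant $c_7$ independent of $z,x,y$. Let $\psi(z,x,y)$ be non-negative, non-decreasing and twice continuously differentiable in $z$ for a.e. $(x,y)\in\Omega\times\Omega$, satisfy Conditions (C1), (C4), (C5), and the estimate $$\psi''(z,x,y)\ge -c_9z^{-1}\psi'(z,x,y)-c_{10}z^{-2}\psi(z,x,y)\quad\text{for a.e. }(x,y),$$ where $c_9<2$ and $c_{10}<c_7$ are constants independent of $z,x,y$. Suppose also that for some $q\ge0$ independent of $z,x,y$ the function $z\mapsto\psi(z,x,y)/z^q$ is non-increasing for a.e. $(x,y)$. Then the function $\psi(z,x,y)\varphi(z,x,y)$ satisfies Conditions (C1)–(C5).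
   Context: Let $\Omega\subseteq\mathbb R^d$ be a domain; functions in $L_{1,loc}(\Omega)$ are complex-valued; derivatives $'$ are with respect to $z$. A real function $r$ on $[0,\infty)$ is almost increasing (resp. almost decreasing) with constant $\beta\ge1$ if $r(s)\le\beta r(t)$ (resp. $\beta r(s)\ge r(t)$) for all $0\le s\le t$. For a function $\theta:[0,\infty)\times\Omega\times\Omega\to[0,\infty)$: (C1) for each $u\in L_{1,loc}(\Omega)$ the function $(x,y)\mapsto\theta(|u(x)-u(y)|,x,y)$ is measurable on $\Omega\times\Omega$; (C2) for every $\varepsilon>0$ there is $\delta\in(0,1)$ such that $\theta(\frac{s+t}{2},x,y)\le(1-\delta)\frac{\theta(s,x,y)+\theta(t,x,y)}{2}$ for a.e. $(x,y)$ and all $s,t>0$ with $|s-t|\ge\varepsilon\max\{s,t\}$; (C3) there are constants $1<p_-\le p_+$ and $\beta\ge1$ such that for a.e. $(x,y)$ the function $t\mapsto\theta(t,x,y)/t^{p_-}$ is almost increasing with constant $\beta$ and $t\mapsto\theta(t,x,y)/t^{p_+}$ is almost decreasing with constant $\beta$; (C4) for a.e. $(x,y)$: $c_1^{-1}\le\theta(1,x,y)\le c_1$ with some constant $c_1>0$, $\theta(0,x,y)=0$, and $\theta(t,x,y)>0$ for $t>0$; (C5) for a.e. $(x,y)$, $\theta(t,x,y)$ is differentiable in $t>0$ and $0<t\theta'(t,x,y)\le c_2\theta(t,x,y)$ for $t>0$, with some constant $c_2>1$. *)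

(* Defs.v *)
From HB Require Import structures.
From mathcomp Require Import all_boot all_order all_algebra.
From mathcomp Require Import all_classical all_reals all_analysis.

Set Implicit Arguments.
Unset Strict Implicit.
Unset Printing Implicit Defensive.

Import Order.TTheory GRing.Theory Num.Theory.
Import numFieldNormedType.Exports.

Local Open Scope classical_set_scope.
Local Open Scope ring_scope.

Definition box {R : realType} {n : nat} (a b : 'rV[R]_n) : set 'rV[R]_n :=
  [set x | forall i : 'I_n, a ord0 i <= x ord0 i <= b ord0 i].

Definition boxvol {R : realType} {n : nat} (a b : 'rV[R]_n) : R :=
  \prod_(i < n) (b ord0 i - a ord0 i).

Definition lebesgue_outer {R : realType} {n : nat} (A : set 'rV[R]_n) : \bar R :=
  ereal_inf [set S : \bar R | exists a b : nat -> 'rV[R]_n,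
    (forall k i, a k ord0 i <= b k ord0 i) /\
    A `<=` \bigcup_k box (a k) (b k) /\
    S = (\sum_(0 <= k <oo) (boxvol (a k) (b k))%:E)%E].

Definition Lmeasurable {R : realType} {n : nat} (E : set 'rV[R]_n) : Prop :=
  forall A : set 'rV[R]_n,
    lebesgue_outer A = (lebesgue_outer (A `&` E) + lebesgue_outer (A `\` E))%E.

Definition Lmeasurable_fun {R : realType} {n : nat} (D : set 'rV[R]_n)
  (f : 'rV[R]_n -> R) : Prop :=
  forall a : R, Lmeasurable (D `&` [set x | a < f x]).

(** Finiteness of the Lebesgue integral over K of a nonnegative function g:
    the integrals of the nonnegative simple functions below g on K
    (sup of which is the Lebesgue integral) are bounded. *)
Definition finite_integral {R : realType} {n : nat} (K : set 'rV[R]_n)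
  (g : 'rV[R]_n -> R) : Prop :=
  exists M : R, forall (m : nat) (E : 'I_m -> set 'rV[R]_n) (c : 'I_m -> R),
    (forall j, Lmeasurable (E j) /\ E j `<=` K /\ 0 <= c j /\
               (forall x, E j x -> c j <= g x)) ->
    (forall j k, j != k -> E j `&` E k = set0) ->
    (\sum_(j < m) ((c j)%:E * lebesgue_outer (E j)) <= M%:E)%E.

(** A complex-valued function u = u1 + i u2 on Omega is in L_{1,loc}(Omega) *)
Definition L1loc {R : realType} {d : nat} (Om : set 'rV[R]_d)
  (u1 u2 : 'rV[R]_d -> R) : Prop :=
  Lmeasurable_fun Om u1 /\ Lmeasurable_fun Om u2 /\
  forall K : set 'rV[R]_d, compact K -> K `<=` Om ->
    finite_integral K (fun x => Num.sqrt (u1 x ^+ 2 + u2 x ^+ 2)).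

Definition pairs_to_row {R : realType} {d : nat}
  (S : set ('rV[R]_d * 'rV[R]_d)) : set 'rV[R]_(d + d) :=
  [set row_mx p.1 p.2 | p in S].

Definition ae_pairs {R : realType} {d : nat} (Om : set 'rV[R]_d)
  (P : 'rV[R]_d -> 'rV[R]_d -> Prop) : Prop :=
  lebesgue_outer (pairs_to_row [set p | Om p.1 /\ Om p.2 /\ ~ P p.1 p.2]) = 0%E.

Definition measurable_on_pairs {R : realType} {d : nat} (Om : set 'rV[R]_d)
  (g : 'rV[R]_d -> 'rV[R]_d -> R) : Prop :=
  Lmeasurable_fun (pairs_to_row [set p | Om p.1 /\ Om p.2])
    (fun z => g (lsubmx z) (rsubmx z)).

Definition almost_increasing {R : realType} (beta : R) (r : R -> R) : Prop :=
  forall s t, 0 < s -> s <= t -> r s <= beta * r t.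
Definition almost_decreasing {R : realType} (beta : R) (r : R -> R) : Prop :=
  forall s t, 0 < s -> s <= t -> r t <= beta * r s.

(** Conditions (C1)-(C5) for theta : [0,oo) x Omega x Omega -> [0,oo) *)
Definition C1 {R : realType} {d : nat} (Om : set 'rV[R]_d)
  (th : R -> 'rV[R]_d -> 'rV[R]_d -> R) : Prop :=
  forall u1 u2 : 'rV[R]_d -> R, L1loc Om u1 u2 ->
    measurable_on_pairs Om
      (fun x y => th (Num.sqrt ((u1 x - u1 y) ^+ 2 + (u2 x - u2 y) ^+ 2)) x y).

Definition C2 {R : realType} {d : nat} (Om : set 'rV[R]_d)
  (th : R -> 'rV[R]_d -> 'rV[R]_d -> R) : Prop :=
  forall eps : R, 0 < eps -> exists delta : R, 0 < delta < 1 /\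
    ae_pairs Om (fun x y => forall s t : R, 0 < s -> 0 < t ->
      eps * Num.max s t <= `|s - t| ->
      th ((s + t) / 2) x y <= (1 - delta) * ((th s x y + th t x y) / 2)).

Definition C3 {R : realType} {d : nat} (Om : set 'rV[R]_d)
  (th : R -> 'rV[R]_d -> 'rV[R]_d -> R) : Prop :=
  exists pm pp beta : R, 1 < pm /\ pm <= pp /\ 1 <= beta /\
    ae_pairs Om (fun x y =>
      almost_increasing beta (fun t => th t x y / t `^ pm) /\
      almost_decreasing beta (fun t => th t x y / t `^ pp)).

Definition C4 {R : realType} {d : nat} (Om : set 'rV[R]_d)
  (th : R -> 'rV[R]_d -> 'rV[R]_d -> R) : Prop :=
  exists c1 : R, 0 < c1 /\
    ae_pairs Om (fun x y => c1^-1 <= th 1 x y <= c1 /\ th 0 x y = 0 /\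
      forall t, 0 < t -> 0 < th t x y).

Definition C5 {R : realType} {d : nat} (Om : set 'rV[R]_d)
  (th : R -> 'rV[R]_d -> 'rV[R]_d -> R) : Prop :=
  exists c2 : R, 1 < c2 /\
    ae_pairs Om (fun x y => forall t, 0 < t ->
      derivable (fun z => th z x y) t 1 /\
      0 < t * derive1 (fun z => th z x y) t <= c2 * th t x y).

Definition C2_pos {R : realType} (f : R -> R) : Prop :=
  forall z, 0 < z -> derivable f z 1 /\ derivable (derive1 f) z 1 /\
    {for z, continuous (derive1 (derive1 f))}.

(* Main.v *)
Require Import Defs.
From HB Require Import structures.
From mathcomp Require Import all_boot all_order all_algebra.
From mathcomp Require Import all_classical all_reals all_analysis.
From mathcomp Require Import measurable_realfun.
From mathcomp Require Import ring lra.
Import Order.TTheory GRing.Theory Num.Theory.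
Import numFieldNormedType.Exports.
Local Open Scope classical_set_scope.
Local Open Scope ring_scope.
Set SsrOldRewriteGoalsOrder.
Section OuterM.
Variables (R : realType) (n : nat).
Local Notation lo := (@lebesgue_outer R n).

Lemma boxvol_ge0 (a b : 'rV[R]_n) : (forall i, a ord0 i <= b ord0 i) -> 0 <= boxvol a b.
Proof. by move=> h; rewrite /boxvol; apply: prodr_ge0 => i _; rewrite subr_ge0. Qed.

Lemma lo_ge0 A : (0 <= lo A)%E.
Proof.
apply: le_ereal_inf_tmp => _ [a [b [hab [_ ->]]]].
apply: nneseries_ge0 => k *; rewrite lee_fin; apply: boxvol_ge0 => i; exact: hab.
Qed.

Lemma lo_mono A B : A `<=` B -> (lo A <= lo B)%E.
Proof.
move=> AB; apply: le_ereal_inf_tmp => _ [a [b [hab [hB ->]]]].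
apply: ereal_inf_lbound; exists a, b; split => //; split => //.
exact: subset_trans hB.
Qed.

End OuterM.
Arguments lo_ge0 {R n}. Arguments lo_mono {R n}. Arguments boxvol_ge0 {R n}.
Section OuterM2.
Variables (R : realType) (n : nat).
Local Notation lo := (@lebesgue_outer R n).
Local Open Scope ereal_scope.

Lemma lo_sigma (F : (set 'rV[R]_n)^nat) :
  lo (\bigcup_k F k) <= \sum_(i <oo) lo (F i).
Proof.
have [[i ioo]|] := pselect (exists i, lo (F i) = +oo).
  rewrite (eseries_pinfty _ _ ioo) ?leey// => k _.
  by rewrite -ltNye (lt_le_trans _ (lo_ge0 _)).
rewrite -forallNE => Foo.
suff add2e (e : {posnum R}) :
    lo (\bigcup_k F k) <= \sum_(i <oo) lo (F i) + e%:num%:E.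
  by apply/lee_addgt0Pr => _/posnumP[].
rewrite (le_trans _ (epsilon_trick _ _ _))//; last by move=> k; exact: lo_ge0.
pose P k (ab : (nat -> 'rV[R]_n) * (nat -> 'rV[R]_n)) :=
  (forall j i, ab.1 j ord0 i <= ab.2 j ord0 i)%R /\
  F k `<=` \bigcup_j box (ab.1 j) (ab.2 j) /\
  \sum_(j <oo) (boxvol (ab.1 j) (ab.2 j))%:E <= lo (F k) + (e%:num / (2 ^ k.+1)%:R)%:E.
have [G PG] : {G : nat -> _ & forall k, P k (G k)}.
  apply: (@choice _ _ P) => k; rewrite /P /lebesgue_outer.
  set S := (X in ereal_inf X); move infS : (ereal_inf S) => iS.
  case: iS infS => [r Sr|Soo|Soo].
  - have en1 : (0 < e%:num / (2 ^ k.+1)%:R)%R by [].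
    have /(lb_ereal_inf_adherent en1) : ereal_inf S \is a fin_num by rewrite Sr.
    move=> [x [a [b [hab [hF ->]]]] xS].
    by exists (a, b); split => //; split => //; rewrite -Sr; exact/ltW.
  - by have := Foo k; rewrite /lebesgue_outer Soo.
  - suff : lbound S 0 by move/le_ereal_inf_tmp; rewrite Soo.
    move=> /= _ [a [b [hab [_ ->]]]]; apply: nneseries_ge0 => j *.
    by rewrite lee_fin; apply: boxvol_ge0 => i; exact: hab.
pose vol (p : nat * nat) := (boxvol ((G p.1).1 p.2) ((G p.1).2 p.2))%:E.
have vol_ge0 x : 0 <= vol x.
  by rewrite lee_fin; apply: boxvol_ge0 => i; exact: (PG x.1).1.
apply: (@le_trans _ _ (\esum_(i in setT) vol i)).
  have /card_esym/ppcard_eqP[f] := card_nat2.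
  apply: ereal_inf_lbound => /=.
  exists (fun k => (G (f k).1).1 (f k).2), (fun k => (G (f k).1).2 (f k).2).
  split; first by move=> k i; exact: (PG (f k).1).1.
  split.
    move=> t [i _ /(PG i).2.1 [j _ hj]]; exists (f^-1%FUN (i, j)) => //=.
    by rewrite invK ?inE.
  rewrite -(esum_pred_image vol _ xpredT) ?[fun=> _]set_true//.
  congr esum; apply/seteqP; split => [x _|x [y _ <-]] //=; exists (f^-1%FUN x) => //; by rewrite invK ?inE.
rewrite (_ : esum _ _ = \sum_(i <oo) \sum_(j <oo ) vol (i, j)); last first.
  pose J : nat -> set (nat * nat) := fun i => [set (i, j) | j in setT].
  rewrite (_ : setT = \bigcup_k J k); last first.
    by rewrite predeqE => -[a b]; split => // _; exists a => //; exists b.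
  rewrite esum_bigcupT /=; last 2 first.
    - apply/trivIsetP => i j _ _ ij.
      rewrite predeqE => -[k m] /=; split => //= -[] [_] _ [<-{k} _].
      by move=> [m' _] [] /esym/eqP; rewrite (negbTE ij).
    - by move=> /= [k m].
  rewrite -(image_id [set: nat]) -fun_true esum_pred_image//; last first.
    by move=> k _; exact: esum_ge0.
  apply: eq_eseriesr => /= j _.
  rewrite -(esum_pred_image vol (pair j) predT)//=; last first.
    by move=> ? ? _ _; exact: (@can_inj _ _ _ snd).
  by congr esum; rewrite predeqE => -[a b]; split; move=> [i _ <-]; exists i.
apply: lee_lim.
- apply: is_cvg_nneseries => k *.
  by apply: nneseries_ge0 => m *; exact: (vol_ge0 (k, m)).
- by apply: is_cvg_nneseries => k *; apply: adde_ge0 => //; exact: lo_ge0.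
- by near=> k; apply: lee_sum => i _; exact: (PG i).2.2.
Unshelve. all: by end_near. Qed.

End OuterM2.
Arguments lo_sigma {R n}.
Section Null.
Variables (R : realType) (n : nat).
Local Notation lo := (@lebesgue_outer R n).
Local Open Scope ereal_scope.

Lemma lo_null_sub (A B : set 'rV[R]_n) : A `<=` B -> lo B = 0 -> lo A = 0.
Proof.
move=> AB B0; apply/eqP; rewrite eq_le lo_ge0 andbT -B0; exact: lo_mono.
Qed.

Lemma lo_null_bigcup (F : (set 'rV[R]_n)^nat) :
  (forall k, lo (F k) = 0) -> lo (\bigcup_k F k) = 0.
Proof.
move=> F0; apply/eqP; rewrite eq_le lo_ge0 andbT.
apply: (le_trans (lo_sigma F)); rewrite eseries0 // => k _ _; exact: F0.
Qed.

Lemma lo_null_U (A B : set 'rV[R]_n) : lo A = 0 -> lo B = 0 -> lo (A `|` B) = 0.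
Proof.
move=> A0 B0.
have -> : A `|` B = \bigcup_k (if k is 0%N then A else B).
  apply/seteqP; split => [x [Ax|Bx]|x [[|k] _ h]]; [by exists 0%N|by exists 1%N|by left|by right].
by apply: lo_null_bigcup => -[|k].
Qed.

End Null.
Arguments lo_null_sub {R n A B}. Arguments lo_null_bigcup {R n F}. Arguments lo_null_U {R n A B}.

Section AE.
Variables (R : realType) (d : nat) (Om : set 'rV[R]_d).

Lemma ae_imp (P Q : 'rV[R]_d -> 'rV[R]_d -> Prop) :
  (forall x y, Om x -> Om y -> P x y -> Q x y) -> ae_pairs Om P -> ae_pairs Om Q.
Proof.
move=> PQ; rewrite /ae_pairs => P0; apply: (lo_null_sub _ P0).
move=> z [[x y] [/= Ox [Oy nQ]] <-]; exists (x, y) => //=; split => //; split => //.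
by move=> /(PQ _ _ Ox Oy).
Qed.

Lemma ae_and (P Q : 'rV[R]_d -> 'rV[R]_d -> Prop) :
  ae_pairs Om P -> ae_pairs Om Q -> ae_pairs Om (fun x y => P x y /\ Q x y).
Proof.
rewrite /ae_pairs => P0 Q0; apply: (lo_null_sub _ (lo_null_U P0 Q0)).
move=> z [[x y] [/= Ox [Oy nPQ]] <-].
have [Pxy|nP] := pselect (P x y).
  by right; exists (x, y) => //=; split => //; split => // Qxy; apply: nPQ.
by left; exists (x, y).
Qed.

Lemma ae_all (P : nat -> 'rV[R]_d -> 'rV[R]_d -> Prop) :
  (forall k, ae_pairs Om (P k)) -> ae_pairs Om (fun x y => forall k, P k x y).
Proof.
rewrite /ae_pairs => P0; apply: (lo_null_sub _ (lo_null_bigcup P0)).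
move=> z [[x y] [/= Ox [Oy nP]] <-].
have [k nPk] : exists k, ~ P k x y.
  by apply/existsNP => hk; apply: nP.
by exists k => //; exists (x, y).
Qed.

End AE.
Section Meas.
Variables (R : realType) (m : nat).
Local Notation lo := (@lebesgue_outer R m.+1).
Local Open Scope ereal_scope.

Lemma lo0 : lo set0 = 0.
Proof.
apply/eqP; rewrite eq_le lo_ge0 andbT.
apply: ereal_inf_lbound; exists (fun=> 0%R), (fun=> 0%R); split => //.
split => //.
rewrite eseries0 // => k _ _; rewrite /boxvol big_ord_recl !mxE subrr mul0r //.
Qed.

HB.instance Definition _ := isOuterMeasure.Build R 'rV[R]_m.+1 lo
  lo0 lo_ge0 lo_mono lo_sigma.

End Meas.

Section Meas2.
Variables (R : realType).

Lemma Lmeas_cara m (E : set 'rV[R]_m.+1) :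
  Lmeasurable E -> measurable (E : set (caratheodory_type (@lebesgue_outer R m.+1))).
Proof. move=> h; change ((@lebesgue_outer R m.+1).-caratheodory E); move=> X; rewrite -setDE; exact: h. Qed.

Lemma cara_Lmeas m (E : set (caratheodory_type (@lebesgue_outer R m.+1))) :
  measurable E -> Lmeasurable (E : set 'rV[R]_m.+1).
Proof. move=> h X; rewrite setDE; exact: h. Qed.

Lemma Lmf_mD m (D : set 'rV[R]_m.+1) f : Lmeasurable_fun D f ->
  measurable (D : set (caratheodory_type (@lebesgue_outer R m.+1))).
Proof.
move=> h.
have -> : D = \bigcup_k (D `&` [set x | - (k%:R) < f x]).
  apply/seteqP; split => [x Dx|x [k _ []//]].
  exists (Num.bound `|f x|) => //; split => //=.
  by have := archi_boundP (normr_ge0 (f x)); rewrite ltr_norml => /andP[].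
by apply: bigcupT_measurable => k; apply: Lmeas_cara; exact: h.
Qed.

Lemma Lmf_mf m (D : set 'rV[R]_m.+1) f : Lmeasurable_fun D f ->
  measurable_fun (D : set (caratheodory_type (@lebesgue_outer R m.+1))) f.
Proof.
move=> h mD; apply: (measurability _ (RGenOInfty.measurableE R)) => //.
move=> _ [_ [x ->] <-].
have -> : f @^-1` `]x, +oo[ = [set y | x < f y].
  by apply/seteqP; split => y /=; rewrite in_itv /= andbT.
by apply: Lmeas_cara; exact: h.
Qed.

Lemma mf_Lmf m (D : set (caratheodory_type (@lebesgue_outer R m.+1))) f :
  measurable D -> measurable_fun D f -> Lmeasurable_fun (D : set 'rV[R]_m.+1) f.
Proof.
move=> mD mf a; apply: cara_Lmeas.
have := mf mD `]a, +oo[%classic (measurable_itv _).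
have -> // : f @^-1` `]a, +oo[ = [set y | a < f y].
by apply/seteqP; split => y /=; rewrite in_itv /= andbT.
Qed.

Lemma Lmf_mul n (hn : (0 < n)%N) (D : set 'rV[R]_n) f g :
  Lmeasurable_fun D f -> Lmeasurable_fun D g ->
  Lmeasurable_fun D (fun x => f x * g x).
Proof.
case: n hn D f g => // m _ D f g hf hg.
apply: mf_Lmf; first exact: Lmf_mD hf.
by apply: measurable_funM; exact: Lmf_mf.
Qed.

End Meas2.
Section Ana.
Variable R : realType.
Implicit Types (f : R -> R).

Lemma mvt_pos f a b : 0 < a -> a < b -> (forall z, 0 < z -> derivable f z 1) ->
  exists2 c, a < c < b & f b - f a = (derive1 f) c * (b - a).
Proof.
move=> a0 ab df.
have := @MVT R f (derive1 f) a b ab; case.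
- move=> z; rewrite in_itv /= => /andP[az _]; rewrite derive1E.
  by apply: derivableP; apply: df; exact: lt_trans a0 az.
- apply: derivable_within_continuous => z; rewrite in_itv /= => /andP[az _].
  by apply: df; exact: lt_le_trans a0 az.
- by move=> c; rewrite in_itv /= => cab h; exists c.
Qed.

Arguments mvt_pos {f a b}.

Lemma mvt_lb f a b L : 0 < a -> a <= b -> (forall z, 0 < z -> derivable f z 1) ->
  (forall z, a < z < b -> L <= (derive1 f) z) -> L * (b - a) <= f b - f a.
Proof.
move=> a0; rewrite le_eqVlt => /predU1P[<-|ab] df hL; first by rewrite !subrr mulr0.
have [c /hL Lc ->] := mvt_pos a0 ab df.
by rewrite ler_wpM2r // subr_ge0 ltW.
Qed.

Arguments mvt_lb {f a b L}.

Lemma mvt_ub f a b U : 0 < a -> a <= b -> (forall z, 0 < z -> derivable f z 1) ->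
  (forall z, a < z < b -> (derive1 f) z <= U) -> f b - f a <= U * (b - a).
Proof.
move=> a0; rewrite le_eqVlt => /predU1P[<-|ab] df hU; first by rewrite !subrr mulr0.
have [c /hU Uc ->] := mvt_pos a0 ab df.
by rewrite ler_wpM2r // subr_ge0 ltW.
Qed.

Arguments mvt_ub {f a b U}.

Lemma mono_of_der f : (forall z, 0 < z -> derivable f z 1) ->
  (forall z, 0 < z -> 0 <= (derive1 f) z) -> forall u v, 0 < u -> u <= v -> f u <= f v.
Proof.
move=> df f'0 u v u0 uv; rewrite -subr_ge0.
have := mvt_lb (L := 0) u0 uv df; rewrite mul0r; apply => z /andP[uz _].
by apply: f'0; exact: lt_trans u0 uz.
Qed.

Arguments mono_of_der {f}.

Lemma uconv f c s t : 0 < c -> 0 < s -> s < t ->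
  (forall z, 0 < z -> derivable f z 1) -> (forall z, 0 < z -> derivable (derive1 f) z 1) ->
  (forall z, 0 < z -> 0 <= f z) -> (forall z, 0 < z -> 0 <= (derive1 f) z) ->
  (forall z, 0 < z -> c * f z / z ^+ 2 <= derive1 (derive1 f) z) ->
  f ((s + t) / 2) * (1 + c * ((t - s) / t) ^+ 2 / 32) <= (f s + f t) / 2.
Proof.
move=> c0 s0 st df df' f0 f'0 f''.
have t0 : 0 < t by exact: lt_trans s0 st.
have f''0 z : 0 < z -> 0 <= derive1 (derive1 f) z.
  move=> z0; apply: le_trans (f'' z z0).
  by apply: mulr_ge0; [apply: mulr_ge0 => //; [exact: ltW|exact: f0]|rewrite invr_ge0 sqr_ge0].
have fmono := mono_of_der df f'0.
have f'mono := mono_of_der df' f''0.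
set m := (s + t) / 2; set m2 := (s + 3 * t) / 4.
have sm : s < m by rewrite /m; lra.
have mm2 : m < m2 by rewrite /m /m2; lra.
have m2t : m2 < t by rewrite /m2; lra.
have m0 : 0 < m by exact: lt_trans s0 sm.
have m20 : 0 < m2 by exact: lt_trans m0 mm2.
have e1 : f m - f s <= (derive1 f) m * (m - s).
  apply: mvt_ub => //; first exact: ltW.
  move=> z /andP[sz zm]; apply: f'mono; [exact: lt_trans s0 sz|exact: ltW].
have e2 : (derive1 f) m * (m2 - m) <= f m2 - f m.
  apply: mvt_lb => //; first exact: ltW.
  move=> z /andP[mz _]; apply: f'mono => //; exact: ltW.
have e3 : (derive1 f) m2 * (t - m2) <= f t - f m2.
  apply: mvt_lb => //; first exact: ltW.
  move=> z /andP[mz _]; apply: f'mono => //; exact: ltW.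
set K := c * f m / t ^+ 2.
have e4 : K * (m2 - m) <= (derive1 f) m2 - (derive1 f) m.
  apply: mvt_lb => //; first exact: ltW.
  move=> z /andP[mz zm2].
  have z0 : 0 < z by exact: lt_trans m0 mz.
  apply: le_trans (f'' z z0).
  rewrite /K -!mulrA; apply: ler_wpM2l; first exact: ltW.
  apply: ler_pM; first exact: f0.
  - by rewrite invr_ge0 sqr_ge0.
  - by apply: fmono => //; exact: ltW.
  rewrite lef_pV2 ?posrE ?exprn_gt0 //.
  by rewrite ler_sqr ?nnegrE; [exact: ltW (lt_trans zm2 m2t)|exact: ltW|exact: ltW].
have tm2 : 0 <= t - m2 by rewrite subr_ge0 ltW.
have e4' := ler_wpM2r tm2 e4.
have -> : f m * (1 + c * ((t - s) / t) ^+ 2 / 32) = f m + K * (t - s) ^+ 2 / 32.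
  by rewrite /K; field; rewrite gt_eqF.
move: e1 e2 e3 e4'; rewrite /m2 /m; set fm := f _; set fm2 := f _.
set d1 := derive1 f _; set d2 := derive1 f _.
move=> e1 e2 e3 e4'.
nra.
Qed.

End Ana.
Arguments uconv {R f c s t}.
Arguments mvt_pos {R f a b}.
Arguments mvt_lb {R f a b L}.
Arguments mvt_ub {R f a b U}.
Arguments mono_of_der {R f}.
Section Ana2.
Variable R : realType.
Implicit Types (f : R -> R).

Lemma C2_core f c eps s t : 0 < c -> 0 < eps -> 0 < s -> s < t ->
  (forall z, 0 < z -> derivable f z 1) -> (forall z, 0 < z -> derivable (derive1 f) z 1) ->
  (forall z, 0 < z -> 0 <= f z) -> (forall z, 0 < z -> 0 <= (derive1 f) z) ->
  (forall z, 0 < z -> c * f z / z ^+ 2 <= derive1 (derive1 f) z) ->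
  eps * t <= t - s ->
  f ((s + t) / 2) <= (1 - (c * eps ^+ 2 / 32) / (1 + c * eps ^+ 2 / 32)) * ((f s + f t) / 2).
Proof.
move=> c0 e0 s0 st df df' f0 f'0 f'' est.
have t0 : 0 < t by exact: lt_trans s0 st.
have := uconv c0 s0 st df df' f0 f'0 f''.
have fm0 : 0 <= f ((s + t) / 2) by apply: f0; lra.
have he : eps <= (t - s) / t.
  have ti : 0 <= t^-1 by rewrite invr_ge0 ltW.
  by have := ler_wpM2r ti est; rewrite mulfK // gt_eqF.
have hb : eps ^+ 2 <= ((t - s) / t) ^+ 2.
  by rewrite ler_sqr ?nnegrE; [|exact: ltW|exact: le_trans (ltW e0) he].
set a := c * eps ^+ 2 / 32.
have a0 : 0 < a by rewrite /a; apply: divr_gt0 => //; apply: mulr_gt0 => //; exact: exprn_gt0.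
have -> : 1 - a / (1 + a) = (1 + a)^-1 by field; rewrite gt_eqF //; lra.
move=> H; rewrite [(1 + a)^-1 * _]mulrC ler_pdivlMr; last lra.
apply: le_trans H; apply: ler_wpM2l => //; rewrite lerD2l /a.
apply: ler_wpM2r => //; apply: ler_wpM2l => //; exact: ltW.
Qed.

Arguments C2_core {f c eps s t}.

Lemma C2_of f c eps : 0 < c -> 0 < eps ->
  (forall z, 0 < z -> derivable f z 1) -> (forall z, 0 < z -> derivable (derive1 f) z 1) ->
  (forall z, 0 < z -> 0 <= f z) -> (forall z, 0 < z -> 0 <= (derive1 f) z) ->
  (forall z, 0 < z -> c * f z / z ^+ 2 <= derive1 (derive1 f) z) ->
  forall s t, 0 < s -> 0 < t -> eps * Num.max s t <= `|s - t| ->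
  f ((s + t) / 2) <= (1 - (c * eps ^+ 2 / 32) / (1 + c * eps ^+ 2 / 32)) * ((f s + f t) / 2).
Proof.
move=> c0 e0 df df' f0 f'0 f'' s t s0 t0.
have [st|ts|<-] := ltgtP s t.
- move=> h.
  have hts : 0 <= t - s by rewrite subr_ge0 ltW.
  have h2 : eps * t <= t - s by move: h; rewrite distrC (ger0_norm hts).
  exact: (C2_core c0 e0 s0 st df df' f0 f'0 f'' h2).
- move=> h; rewrite addrC [f s + _]addrC.
  have hts : 0 <= s - t by rewrite subr_ge0 ltW.
  have h2 : eps * s <= s - t by move: h; rewrite (ger0_norm hts).
  exact: (C2_core c0 e0 t0 ts df df' f0 f'0 f'' h2).
- rewrite subrr normr0 => h; exfalso.
  have : 0 < eps * s by apply: mulr_gt0.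
  by rewrite ltNge h.
Qed.

End Ana2.
Section Ana3.
Variable R : realType.
Implicit Types (f : R -> R).

Lemma mid_conv f z : 0 < z ->
  (forall w, 0 < w -> derivable f w 1) -> (forall w, 0 < w -> derivable (derive1 f) w 1) ->
  {for z, continuous (derive1 (derive1 f))} ->
  (forall s t, 0 < s -> 0 < t -> f ((s + t) / 2) <= (f s + f t) / 2) ->
  0 <= derive1 (derive1 f) z.
Proof.
move=> z0 df df' cf mid; rewrite leNgt; apply/negP => hneg.
have /nbhs_ballP[e e0 He] : \forall w \near z, derive1 (derive1 f) w < 0.
  exact: (@cvgr_lt _ _ _ _ (derive1 (derive1 f)) _ cf 0 hneg).
have hm1 : Num.min e z <= e by rewrite ge_min lexx.
have hm2 : Num.min e z <= z by rewrite ge_min lexx orbT.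
have hm0 : 0 < Num.min e z by rewrite lt_min e0 z0.
set h := Num.min e z / 2.
have h0 : 0 < h by rewrite /h; lra.
have he : h < e by rewrite /h; lra.
have hz : h < z by rewrite /h; lra.
have zh0 : 0 < z - h by lra.
have zzh : z < z + h by lra.
have [c1 /andP[c1a c1b] E1] := mvt_pos z0 zzh df.
have zhz : z - h < z by lra.
have [c2 /andP[c2a c2b] E2] := mvt_pos zh0 zhz df.
have c21 : c2 < c1 by exact: lt_trans c2b c1a.
have c20 : 0 < c2 by exact: lt_trans zh0 c2a.
have [c3 /andP[c3a c3b] E3] := mvt_pos c20 c21 df'.
have hc3 : derive1 (derive1 f) c3 < 0.
  apply: He; rewrite /ball /= ltr_distlC.
  by clear - c2a c3a c3b c1b he; apply/andP; split; lra.
have M := mid (z - h) (z + h) zh0 (lt_trans z0 zzh).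
rewrite (_ : (z - h + (z + h)) / 2 = z) in M; last by field.
have P : 0 < (c1 - c2) * h by apply: mulr_gt0 => //; rewrite subr_gt0.
have K1 : 0 <= (derive1 f c1 - derive1 f c2) * h.
  move: E1 E2; rewrite (_ : z + h - z = h); last by ring.
  rewrite (_ : z - (z - h) = h); last by ring.
  move=> E1 E2; rewrite mulrBl -E1 -E2.
  by clear - M; lra.
have K2 : (derive1 f c1 - derive1 f c2) * h = derive1 (derive1 f) c3 * ((c1 - c2) * h).
  by rewrite E3 -mulrA.
have K3 : derive1 (derive1 f) c3 * ((c1 - c2) * h) < 0 by rewrite pmulr_llt0.
by rewrite K2 in K1; rewrite leNgt K3 in K1.
Qed.
End Ana3.
Section Ana4.
Variable R : realType.
Implicit Types (f : R -> R).

Lemma tangent f z : 0 < z ->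
  (forall w, 0 < w -> derivable f w 1) -> (forall w, 0 < w -> derivable (derive1 f) w 1) ->
  (forall w, 0 < w -> 0 <= derive1 (derive1 f) w) -> 0 <= derive1 f z ->
  (forall e, 0 < e -> exists2 s, 0 < s < z & f s <= e) ->
  f z <= z * derive1 f z.
Proof.
move=> z0 df df' f''0 f'z small.
have f'mono := mono_of_der df' f''0.
apply/ler_addgt0Pr => e e0.
have [s /andP[s0 sz] fs] := small e e0.
have H : f z - f s <= derive1 f z * (z - s).
  apply: mvt_ub => //; first exact: ltW.
  move=> w /andP[sw wz]; apply: f'mono; [exact: lt_trans s0 sw|exact: ltW].
have K : 0 <= s * derive1 f z by apply: mulr_ge0 => //; exact: ltW.
by clear - H K fs; nra.
Qed.

Lemma small_of_C3 (phi : R -> R) pm beta z : 1 < pm -> 0 < z ->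
  (forall s t, 0 < s -> s <= t -> phi s / s `^ pm <= beta * (phi t / t `^ pm)) ->
  forall e, 0 < e -> exists2 s, 0 < s < z & phi s <= e.
Proof.
move=> pm1 z0 H e e0.
set K := `|beta * phi 1| + 1.
have K0 : 0 < K by rewrite /K ltr_pwDr // normr_ge0.
have eK : 0 < e / K by apply: divr_gt0.
set s := Num.min (z / 2) (Num.min 1 (e / K)).
have z2 : 0 < z / 2 by apply: divr_gt0.
have s0 : 0 < s by rewrite /s !lt_min z2 eK ltr01.
have sz2 : s <= z / 2 by rewrite /s ge_min lexx.
have s1 : s <= 1 by rewrite /s !ge_min lexx orbT.
have se : s <= e / K by rewrite /s !ge_min lexx !orbT.
exists s; first by apply/andP; split => //; apply: le_lt_trans sz2 _; clear -z0; lra.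
have H1 := H s 1 s0 s1.
rewrite powR1 /= divr1 in H1.
have HK : beta * phi 1 <= K.
  by rewrite /K; have := ler_norm (beta * phi 1); move=> hn; clear - hn; lra.
have H2 : phi s / s `^ pm <= K by exact: le_trans H1 HK.
have sp0 : 0 < s `^ pm by apply: powR_gt0.
have H3 : phi s <= K * s `^ pm by rewrite -ler_pdivrMr.
have H4 : s `^ pm <= s.
  have pm0 : 0 < pm by apply: lt_trans ltr01 pm1.
  rewrite -(mulr_powRB1 (ltW s0) pm0).
  apply: (@le_trans _ _ (s * 1)); last by rewrite mulr1.
  apply: ler_wpM2l; first exact: ltW.
  have pm10 : 0 <= pm - 1 by rewrite subr_ge0 ltW.
  have sn : s \is Num.nneg by rewrite nnegrE ltW.
  have on : (1 : R) \is Num.nneg by rewrite nnegrE.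
  by have := ge0_ler_powR pm10 sn on s1; rewrite /= powR1.
apply: le_trans H3 _.
apply: le_trans (_ : K * s <= _); first by apply: ler_wpM2l => //; exact: ltW.
by rewrite mulrC -ler_pdivlMr.
Qed.

End Ana4.
Arguments mid_conv {R f z}.
Arguments tangent {R f z}.
Section Ana5.
Variable R : realType.
Implicit Types (f P Q : R -> R).

Lemma prod_deriv P Q z : derivable P z 1 -> derivable Q z 1 ->
  derivable (fun w => P w * Q w) z 1 /\
  derive1 (fun w => P w * Q w) z = derive1 P z * Q z + P z * derive1 Q z.
Proof.
move=> dP dQ.
have -> : (fun w => P w * Q w) = P * Q by [].
split; first exact: derivableM.
rewrite !derive1E deriveM //; rewrite /GRing.scale /=; ring.
Qed.

Arguments prod_deriv {P Q z}.

Lemma near_pos (z : R) : 0 < z -> \forall w \near z, 0 < w.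
Proof.
move=> z0; apply/nbhs_ballP; exists z => //= w.
by rewrite /ball /= ltr_distlC => /andP[h _]; move: h; rewrite subrr.
Qed.

Arguments near_pos {z}.

Lemma prod_deriv2 P Q z : 0 < z ->
  (forall w, 0 < w -> derivable P w 1) -> (forall w, 0 < w -> derivable Q w 1) ->
  derivable (derive1 P) z 1 -> derivable (derive1 Q) z 1 ->
  derivable (derive1 (fun w => P w * Q w)) z 1 /\
  derive1 (derive1 (fun w => P w * Q w)) z =
    derive1 (derive1 P) z * Q z + 2 * (derive1 P z * derive1 Q z) + P z * derive1 (derive1 Q) z.
Proof.
move=> z0 dP dQ dP' dQ'.
set G := derive1 P * Q + P * derive1 Q.
have E : \forall w \near z, G w = derive1 (fun w => P w * Q w) w.
  move: (near_pos z0); apply: filterS => w w0.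
  by rewrite (prod_deriv (dP w w0) (dQ w w0)).2.
have dG : derivable G z 1.
  apply: derivableD.
  exact: (derivableM dP' (dQ z z0)).
  exact: (derivableM (dP z z0) dQ').
split; first exact: near_eq_derivable E dG.
rewrite derive1E -(near_eq_derive _ E) deriveD.
rewrite (deriveM dP' (dQ z z0)) (deriveM (dP z z0) dQ').
rewrite /GRing.scale /= -!derive1E.
move: (derive1 P z) (derive1 Q z) (derive1 (derive1 P) z) (derive1 (derive1 Q) z) (P z) (Q z) => a b c d e g.
ring.
exact: (derivableM dP' (dQ z z0)).
exact: (derivableM (dP z z0) dQ').
Qed.

End Ana5.
Arguments prod_deriv {R P Q z}.
Arguments near_pos {R z}.
Arguments prod_deriv2 {R P Q z}.
Section Fin.
Variable R : realType.

Lemma lo_dim0 (A : set 'rV[R]_0) : (1 <= lebesgue_outer A)%E.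
Proof.
apply: le_ereal_inf_tmp => _ [a [b [_ [_ ->]]]].
apply: le_trans (nneseries_lim_ge 1 _); last by move=> k _ _; rewrite lee_fin /boxvol big_ord0.
by rewrite big_nat1 /boxvol big_ord0.
Qed.

Lemma mid_of_family (Q : R -> R) (dl : nat -> R) :
  (forall k, 0 < dl k) -> (forall z, 0 < z -> 0 <= Q z) ->
  (forall k s t, 0 < s -> 0 < t -> (k.+1%:R)^-1 * Num.max s t <= `|s - t| ->
     Q ((s + t) / 2) <= (1 - dl k) * ((Q s + Q t) / 2)) ->
  forall s t, 0 < s -> 0 < t -> Q ((s + t) / 2) <= (Q s + Q t) / 2.
Proof.
move=> dl0 Q0 H s t s0 t0.
have avg0 : 0 <= (Q s + Q t) / 2 by apply: divr_ge0 => //; apply: addr_ge0; exact: Q0.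
have [<-|st] := eqVneq s t.
  have hs : (s + s) / 2 = s by field.
  by rewrite hs; clear - avg0; lra.
set M := Num.max s t.
have M0 : 0 < M by rewrite /M lt_max s0.
have d0 : 0 < `|s - t| by rewrite normr_gt0 subr_eq0.
set r := `|s - t| / M.
have r0 : 0 < r by apply: divr_gt0.
set k := Num.bound r^-1.
have hk : r^-1 < k%:R by apply: archi_boundP; rewrite invr_ge0 ltW.
apply: le_trans (H k s t s0 t0 _) _.
  have hk1 : r^-1 <= k.+1%:R by apply: le_trans (ltW hk) _; rewrite ler_nat.
  have : (k.+1%:R)^-1 <= r.
    by rewrite -(invrK r) lef_pV2 ?posrE ?invr_gt0 // ltr0n.
  move=> hr; apply: le_trans (ler_wpM2r (ltW M0) hr) _.
  by rewrite /r mulfVK // gt_eqF.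
apply: ler_piMl => //.
by rewrite gerDl oppr_le0 ltW.
Qed.

End Fin.
Section Fin2.
Variable R : realType.

Lemma prod_C2 (P Q : R -> R) c7 c9 c10 eps :
  c9 < 2 -> c10 < c7 -> 0 < eps ->
  C2_pos P -> C2_pos Q ->
  (forall z, 0 < z -> 0 <= P z) -> (forall z, 0 < z -> 0 < derive1 P z) ->
  (forall z, 0 < z -> 0 <= Q z) -> (forall z, 0 < z -> 0 < derive1 Q z) ->
  (forall z, 0 < z -> c7 / z ^+ 2 * Q z <= derive1 (derive1 Q) z) ->
  (forall z, 0 < z -> - (c9 / z) * derive1 P z - c10 / z ^+ 2 * P z <= derive1 (derive1 P) z) ->
  (forall s t, 0 < s -> 0 < t -> Q ((s + t) / 2) <= (Q s + Q t) / 2) ->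
  (forall z, 0 < z -> forall e, 0 < e -> exists2 s, 0 < s < z & Q s <= e) ->
  forall s t, 0 < s -> 0 < t -> eps * Num.max s t <= `|s - t| ->
  P ((s + t) / 2) * Q ((s + t) / 2) <=
  (1 - ((c7 - c10) * eps ^+ 2 / 32) / (1 + (c7 - c10) * eps ^+ 2 / 32)) *
    ((P s * Q s + P t * Q t) / 2).
Proof.
move=> c9l c10l e0 cP cQ P0 P'0 Q0 Q'0 hQ'' hP'' mid small.
have dP z : 0 < z -> derivable P z 1 by move=> z0; case: (cP z z0).
have dQ z : 0 < z -> derivable Q z 1 by move=> z0; case: (cQ z z0).
have dP' z : 0 < z -> derivable (derive1 P) z 1 by move=> z0; case: (cP z z0) => _ [].
have dQ' z : 0 < z -> derivable (derive1 Q) z 1 by move=> z0; case: (cQ z z0) => _ [].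
have Q''0 z : 0 < z -> 0 <= derive1 (derive1 Q) z.
  move=> z0; apply: (mid_conv z0 dQ dQ' _ mid); by case: (cQ z z0) => _ [].
have tan z : 0 < z -> Q z <= z * derive1 Q z.
  move=> z0; exact: (tangent z0 dQ dQ' Q''0 (ltW (Q'0 z z0)) (small z z0)).
pose f := fun w => P w * Q w.
move=> s t s0 t0 hst.
have := @C2_of R f (c7 - c10) eps.
move=> /(_ _ e0 _ _ _ _ _ s t s0 t0 hst); apply.
- by rewrite subr_gt0.
- move=> z z0; exact: (prod_deriv (dP z z0) (dQ z z0)).1.
- move=> z z0; exact: (prod_deriv2 z0 dP dQ (dP' z z0) (dQ' z z0)).1.
- move=> z z0; apply: mulr_ge0; [exact: P0|exact: Q0].
- move=> z z0; rewrite (prod_deriv (dP z z0) (dQ z z0)).2.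
  by apply: addr_ge0; apply: mulr_ge0; [exact: ltW (P'0 z z0)|exact: Q0|exact: P0|exact: ltW (Q'0 z z0)].
move=> z z0; rewrite (prod_deriv2 z0 dP dQ (dP' z z0) (dQ' z z0)).2.
have h4 := hP'' z z0; have h2 := hQ'' z z0; have ht := tan z z0.
have Pz := P0 z z0; have Qz := Q0 z z0; have P'z := ltW (P'0 z z0).
have u0 : 0 < z^-1 by rewrite invr_gt0.
have zu : z * z^-1 = 1 by rewrite mulfV // gt_eqF.
rewrite /f.
move: h4 h2 ht Pz Qz P'z zu u0.
rewrite -!exprVn.
move: (P z) (Q z) (derive1 P z) (derive1 Q z) (derive1 (derive1 P) z) (derive1 (derive1 Q) z) (z^-1).
move=> p q p1 q1 p2 q2 u h4 h2 ht Pz Qz P'z zu u0.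
have k1 := ler_wpM2r Qz h4.
have k2 := ler_wpM2l Pz h2.
have k3 : q * u <= q1.
  have := ler_wpM2r (ltW u0) ht; rewrite mulrAC zu mul1r //.
have k3' := ler_wpM2l P'z k3.
have k4 : 0 <= (2 - c9) * (p1 * (q * u)).
  apply: mulr_ge0; first by rewrite subr_ge0 ltW.
  by apply: mulr_ge0 => //; apply: mulr_ge0 => //; exact: ltW.
clear - k1 k2 k3' k4.
lra.
Qed.

End Fin2.
Arguments ae_imp {R d Om P Q}. Arguments ae_and {R d Om P Q}. Arguments ae_all {R d Om P}.
Section Parts.
Variables (R : realType) (d : nat) (Om : set 'rV[R]_d).
Variables (phi psi : R -> 'rV[R]_d -> 'rV[R]_d -> R).

Lemma part_C1 : (0 < d)%N -> C1 Om phi -> C1 Om psi ->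
  C1 Om (fun z x y => psi z x y * phi z x y).
Proof.
move=> d0 h1 h2 u1 u2 hu.
have hn : (0 < d + d)%N by rewrite addn_gt0 d0.
exact: (@Lmf_mul R (d + d) hn _ _ _ (h2 u1 u2 hu) (h1 u1 u2 hu)).
Qed.

Lemma part_C4 : C4 Om phi -> C4 Om psi -> C4 Om (fun z x y => psi z x y * phi z x y).
Proof.
move=> [c1 [c10 a1]] [c1' [c10' a2]].
exists (c1 * c1'); split; first exact: mulr_gt0.
apply: ae_imp (ae_and a1 a2) => x y _ _ [[/andP[l1 u1] [z1 p1]] [/andP[l2 u2] [z2 p2]]].
split; [apply/andP; split|split].
- rewrite invfM mulrC; apply: ler_pM => //; rewrite invr_ge0 ltW //.
- have g1 : 0 <= psi 1 x y by apply: le_trans l2; rewrite invr_ge0 ltW.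
  have g2 : 0 <= phi 1 x y by apply: le_trans l1; rewrite invr_ge0 ltW.
  by rewrite [c1 * _]mulrC; apply: ler_pM.
- by rewrite z2 mul0r.
- by move=> t t0; apply: mulr_gt0; [exact: p2|exact: p1].
Qed.

Lemma part_C5 : C4 Om phi -> C4 Om psi -> C5 Om phi -> C5 Om psi ->
  C5 Om (fun z x y => psi z x y * phi z x y).
Proof.
move=> [c1 [_ a1]] [c1' [_ a2]] [c2 [c2g a3]] [c2' [c2g' a4]].
exists (c2 + c2'); split.
  by apply: lt_le_trans c2g _; rewrite lerDl ltW // (lt_trans ltr01 c2g').
apply: ae_imp (ae_and (ae_and a1 a2) (ae_and a3 a4)).
move=> x y _ _ [[[_ [_ p1]] [_ [_ p2]]] [h3 h4]] t t0.
have [d3 /andP[l3 u3]] := h3 t t0.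
have [d4 /andP[l4 u4]] := h4 t t0.
have [dprod Eprod] := prod_deriv d4 d3.
split => //; rewrite Eprod.
have q1 := p1 t t0; have q2 := p2 t t0.
move: l3 u3 l4 u4 q1 q2.
move: (derive1 (fun z => phi z x y) t) (derive1 (fun z => psi z x y) t) (phi t x y) (psi t x y).
move=> dph dps ph ps l3 u3 l4 u4 q1 q2.
have -> : t * (dps * ph + ps * dph) = (t * dps) * ph + ps * (t * dph) by ring.
apply/andP; split.
  by apply: addr_gt0; apply: mulr_gt0.
have k1 := ler_wpM2r (ltW q1) u4.
have k2 := ler_wpM2l (ltW q2) u3.
clear - k1 k2; lra.
Qed.

Lemma part_C3 q : 0 <= q ->
  (forall t x y, 0 <= t -> Om x -> Om y -> 0 <= phi t x y) ->
  C3 Om phi ->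
  ae_pairs Om (fun x y =>
    (forall t, 0 <= t -> 0 <= psi t x y) /\
    (forall s t, 0 <= s -> s <= t -> psi s x y <= psi t x y) /\
    C2_pos (fun z => psi z x y)) ->
  ae_pairs Om (fun x y => forall s t, 0 < s -> s <= t ->
    psi t x y / t `^ q <= psi s x y / s `^ q) ->
  C3 Om (fun z x y => psi z x y * phi z x y).
Proof.
move=> q0 phi0 [pm [pp [beta [pm1 [pmpp [b1 a3]]]]]] apsi aq.
exists pm, (pp + q), beta; split => //; split; first by rewrite (le_trans pmpp) // lerDl.
split => //.
apply: ae_imp (ae_and a3 (ae_and apsi aq)).
move=> x y Ox Oy [[inc dec] [[ps0 [psmono _]] qdec]].
split.
- move=> s t s0 st.
  have t0 : 0 < t by exact: lt_le_trans s0 st.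
  have A := inc s t s0 st.
  have Y0 : 0 <= phi t x y / t `^ pm.
    by apply: divr_ge0; [exact: phi0 (ltW t0) Ox Oy|exact: powR_ge0].
  have P0 : 0 <= psi s x y by exact: ps0 s (ltW s0).
  have Pm : psi s x y <= psi t x y by exact: psmono s t (ltW s0) st.
  have bY : 0 <= beta * (phi t x y / t `^ pm).
    by apply: mulr_ge0 => //; exact: le_trans ler01 b1.
  rewrite -!mulrA.
  move: A Y0 P0 Pm bY.
  move: (phi s x y / s `^ pm) (phi t x y / t `^ pm) (psi s x y) (psi t x y).
  move=> X Y a b A Y0 P0 Pm bY.
  have k1 := ler_wpM2l P0 A.
  have k2 := ler_wpM2r bY Pm.
  clear - k1 k2; lra.
- move=> s t s0 st.
  have t0 : 0 < t by exact: lt_le_trans s0 st.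
  have E u : 0 < u -> psi u x y * phi u x y / u `^ (pp + q) =
      (phi u x y / u `^ pp) * (psi u x y / u `^ q).
    move=> u0.
    have hc : (pp + q == 0) ==> (u != 0) by rewrite gt_eqF // implybT.
    rewrite (powRD hc).
    rewrite invfM.
    move: (psi u x y) (phi u x y) ((u `^ pp)^-1) ((u `^ q)^-1) => a b c e.
    ring.
  rewrite !E //.
  have B := dec s t s0 st.
  have C := qdec s t s0 st.
  have n1 : 0 <= phi t x y / t `^ pp.
    by apply: divr_ge0; [exact: phi0 (ltW t0) Ox Oy|exact: powR_ge0].
  have n2 : 0 <= psi t x y / t `^ q.
    by apply: divr_ge0; [exact: ps0 t (ltW t0)|exact: powR_ge0].
  apply: le_trans (ler_pM n1 n2 B C) _.
  move: (phi s x y / s `^ pp) (psi s x y / s `^ q) => X Y.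
  by rewrite mulrA.
Qed.

Lemma part_C2 c7 c9 c10 : c9 < 2 -> c10 < c7 ->
  (forall t x y, 0 <= t -> Om x -> Om y -> 0 <= phi t x y) ->
  C2 Om phi -> C3 Om phi -> C5 Om phi ->
  ae_pairs Om (fun x y => C2_pos (fun z => phi z x y)) ->
  ae_pairs Om (fun x y => forall z, 0 < z ->
    c7 / z ^+ 2 * phi z x y <= derive1 (derive1 (fun z => phi z x y)) z) ->
  ae_pairs Om (fun x y =>
    (forall t, 0 <= t -> 0 <= psi t x y) /\
    (forall s t, 0 <= s -> s <= t -> psi s x y <= psi t x y) /\
    C2_pos (fun z => psi z x y)) ->
  C5 Om psi ->
  ae_pairs Om (fun x y => forall z, 0 < z ->
    - (c9 / z) * derive1 (fun z => psi z x y) z - c10 / z ^+ 2 * psi z x y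
      <= derive1 (derive1 (fun z => psi z x y)) z) ->
  C2 Om (fun z x y => psi z x y * phi z x y).
Proof.
move=> c9l c10l phi0 C2phi [pm [pp [beta [pm1 [_ [_ a3]]]]]] [c2 [_ a5]] aC2p a7 apsi.
move=> [c2' [_ a5']] a9 eps e0.
set a := (c7 - c10) * eps ^+ 2 / 32.
have a0 : 0 < a.
  rewrite /a; apply: divr_gt0 => //; apply: mulr_gt0; first by rewrite subr_gt0.
  exact: exprn_gt0.
exists (a / (1 + a)); split.
  apply/andP; split; first by apply: divr_gt0 => //; lra.
  by rewrite ltr_pdivrMr; lra.
have [dl hdl] : {dl : nat -> R & forall k, 0 < dl k < 1 /\
    ae_pairs Om (fun x y => forall s t : R, 0 < s -> 0 < t ->
      (k.+1%:R)^-1 * Num.max s t <= `|s - t| ->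
      phi ((s + t) / 2) x y <= (1 - dl k) * ((phi s x y + phi t x y) / 2))}.
  apply: (@choice _ _ (fun k dk => 0 < dk < 1 /\
    ae_pairs Om (fun x y => forall s t : R, 0 < s -> 0 < t ->
      (k.+1%:R)^-1 * Num.max s t <= `|s - t| ->
      phi ((s + t) / 2) x y <= (1 - dk) * ((phi s x y + phi t x y) / 2)))).
  move=> k; apply: C2phi; by rewrite invr_gt0 ltr0n.
have fam := ae_all (fun k => (hdl k).2).
apply: ae_imp (ae_and (ae_and (ae_and a3 a5) (ae_and aC2p a7))
  (ae_and (ae_and apsi a5') (ae_and a9 fam))).
move=> x y Ox Oy [[[[inc _] h5] [hC2p h7]] [[[ps0 [_ hC2psi]] h5'] [h9 hfam]]].
have Q0 z : 0 < z -> 0 <= phi z x y by move=> z0; exact: phi0 (ltW z0) Ox Oy.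
have hP0 : forall z, 0 < z -> 0 <= psi z x y by move=> z z0; exact: ps0 (ltW z0).
have hP1 : forall z, 0 < z -> 0 < derive1 (fun z => psi z x y) z.
  move=> z z0; have [_ /andP[h _]] := h5' z z0.
  by move: h; rewrite pmulr_rgt0.
have hQ1 : forall z, 0 < z -> 0 < derive1 (fun z => phi z x y) z.
  move=> z z0; have [_ /andP[h _]] := h5 z z0.
  by move: h; rewrite pmulr_rgt0.
have hmid : forall s t, 0 < s -> 0 < t ->
    phi ((s + t) / 2) x y <= (phi s x y + phi t x y) / 2.
  apply: (@mid_of_family R (fun z => phi z x y) dl) => //.
  by move=> k; case/andP: (hdl k).1.
have hsmall : forall z, 0 < z -> forall e, 0 < e -> exists2 s, 0 < s < z & phi s x y <= e.
  by move=> z z0; exact: small_of_C3 pm1 z0 inc.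
move=> s t s0 t0 hst.
exact: (@prod_C2 R (fun z => psi z x y) (fun z => phi z x y) c7 c9 c10 eps c9l c10l e0
  hC2psi hC2p hP0 hP1 Q0 hQ1 h7 h9 hmid hsmall s t s0 t0 hst).
Qed.

End Parts.
Theorem theorem2p11 (R : realType) (d : nat) (Om : set 'rV[R]_d)
  (phi psi : R -> 'rV[R]_d -> 'rV[R]_d -> R) (c7 c9 c10 q : R) :
  (* Omega is a domain *)
  open Om -> connected Om -> Om !=set0 ->
  (* phi : [0,oo) x Omega x Omega -> [0,oo) satisfies (C1)-(C5) *)
  (forall t x y, 0 <= t -> Om x -> Om y -> 0 <= phi t x y) ->
  C1 Om phi -> C2 Om phi -> C3 Om phi -> C4 Om phi -> C5 Om phi ->
  ae_pairs Om (fun x y => C2_pos (fun z => phi z x y)) ->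
  ae_pairs Om (fun x y => forall z, 0 < z ->
    c7 / z ^+ 2 * phi z x y <= derive1 (derive1 (fun z => phi z x y)) z) ->
  (* psi *)
  ae_pairs Om (fun x y =>
    (forall t, 0 <= t -> 0 <= psi t x y) /\
    (forall s t, 0 <= s -> s <= t -> psi s x y <= psi t x y) /\
    C2_pos (fun z => psi z x y)) ->
  C1 Om psi -> C4 Om psi -> C5 Om psi ->
  c9 < 2 -> c10 < c7 ->
  ae_pairs Om (fun x y => forall z, 0 < z ->
    - (c9 / z) * derive1 (fun z => psi z x y) z - c10 / z ^+ 2 * psi z x y
      <= derive1 (derive1 (fun z => psi z x y)) z) ->
  0 <= q ->
  ae_pairs Om (fun x y => forall s t, 0 < s -> s <= t ->
    psi t x y / t `^ q <= psi s x y / s `^ q) ->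
  C1 Om (fun z x y => psi z x y * phi z x y) /\
  C2 Om (fun z x y => psi z x y * phi z x y) /\
  C3 Om (fun z x y => psi z x y * phi z x y) /\
  C4 Om (fun z x y => psi z x y * phi z x y) /\
  C5 Om (fun z x y => psi z x y * phi z x y).
Proof.
move=> _ _ _ phi0 C1phi C2phi C3phi C4phi C5phi aC2p a7 apsi C1psi C4psi C5psi.
move=> c9l c10l a9 q0 aq.
have [d0|dpos] := posnP d.
  exfalso; subst d; case: C4phi => c1 [_ ae].
  have : (1 <= (0 : \bar R))%E by rewrite -ae; exact: lo_dim0.
  by rewrite lee_fin ler10.
split; first exact: part_C1.
split; first exact: (@part_C2 R d Om phi psi c7 c9 c10 c9l c10l phi0 C2phi C3phi C5phi aC2p a7 apsi C5psi a9).
split; first exact: (@part_C3 R d Om phi psi q q0 phi0 C3phi apsi aq).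
split; first exact: part_C4.
exact: part_C5.
Qed.
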